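(* Let $n\ge1$, $m\ge1$, and let $d_1,\dots,d_m\in(0,1)\cap\mathbb{Q}$ with $\sum_{i=1}^m d_i<n+1$. Let $\mathcal{X}=\mathbb{P}^n\times\mathbb{P}^1$, with projections $\mathrm{pr}_1:\mathcal{X}\to\mathbb{P}^n$ and $\mathrm{pr}_2:\mathcal{X}\to\mathbb{P}^1$. Let $h$ be the hyperplane class of $\mathbb{P}^n$ and $l$ the point class of $\mathbb{P}^1$. Let $$\mathcal{D}=\sum_{i=1}^{m-1}d_i\,(H_i\times\mathbb{P}^1)+d_m\,\mathcal{H},$$ where $H_1,\dots,H_{m-1}\subset\mathbb{P}^n$ are fixed hyperplanes and $\mathcal{H}\subset\mathcal{X}$ is a divisor of class $\mathrm{pr}_1^*h+\mathrm{pr}_2^*l$ whose fibres are hyperplanes moving with $t\in\mathbb{P}^1$. Assume the hyperplanes are in general position. Consider the family $\mathrm{pr}_2:(\mathcal{X},\mathcal{D})\to\mathbb{P}^1$ with relative polarization $\mathcal{L}=-K_{\mathcal{X}/\mathbb{P}^1}-\mathcal{D}$. Then $$\deg c_1(\lambda_{\mathrm{CM},\mathcal{D}})=(n+1)\,d_m\Big(n+1-\sum_{i=1}^m d_i\Big)^n.$$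
   Context: For a $\mathbb{Q}$-Gorenstein flat family $f:(\mathcal{X},\mathcal{D})\to B$ of $n$-dimensional pairs over a normal proper variety $B$, with $f$-ample $\mathbb{Q}$-line bundle $\mathcal{L}$ and $\mathcal{D}=\sum_k d_k\mathcal{D}_k$, the first Chern class of the log CM $\mathbb{Q}$-line bundle is $$c_1(\lambda_{\mathrm{CM},\mathcal{D}})=n\frac{(-K_{\mathcal{X}_b}-\mathcal{D}_b)\cdot\mathcal{L}_b^{n-1}}{(\mathcal{L}_b^n)}f_*c_1(\mathcal{L})^{n+1}-(n+1)f_*\big((-K_{\mathcal{X}/B}-\mathcal{D})\cdot c_1(\mathcal{L})^n\big).$$ For $\mathcal{L}=-K_{\mathcal{X}/B}-\mathcal{D}$ this equals $-f_*c_1(\mathcal{L})^{n+1}$. When $B=\mathbb{P}^1$ this is a class on a curve, identified with its degree. *)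

(* Defs.v *)
From HB Require Import structures.
From mathcomp Require Import all_boot all_order all_algebra.
Set Implicit Arguments. Unset Strict Implicit. Unset Printing Implicit Defensive.
Import Order.TTheory GRing.Theory Num.Theory.
Local Open Scope ring_scope.

(* The rational Chow ring A^*(P^n x P^1)_Q = Q[h,l]/(h^(n+1), l^2), with
   h = pr1^* (hyperplane class), l = pr2^* (point class).
   A class is represented by a polynomial in h whose coefficients are
   polynomials in l: the coefficient of h^i l^j of a is (a`_i)`_j.
   Since the relations are monomial, coefficient extraction in degrees
   i <= n, j <= 1 is compatible with the quotient, so we never need to
   reduce explicitly. *)
Notation chow := {poly {poly rat}}.
Definition cst (c : rat) : chow := c%:P%:P.
Definition hcl : chow := 'X.
Definition lcl : chow := ('X)%:P.

(* degree of a codimension-(n+1) class on X (h^n l |-> 1), which is the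
   degree of its pushforward pr2_* to P^1 *)
Definition push_deg (n : nat) (a : chow) : rat := (a`_n)`_1.
(* degree of the restriction to a fibre P^n of a codimension-n class
   (h^n |-> 1, l |-> 0) *)
Definition fib_deg (n : nat) (a : chow) : rat := (a`_n)`_0.

(* relative canonical class K_{X/P^1} = pr1^* K_{P^n} = -(n+1) h *)
Definition K_rel (n : nat) : chow := - (n.+1)%:R * hcl.

(* Boundary D = sum_{i=1}^{m-1} d_i (H_i x P^1) + d_m Hcal, with
   [H_i x P^1] = pr1^* h and [Hcal] = pr1^* h + pr2^* l. *)
Definition bdry (m : nat) (d : nat -> rat) : chow :=
  \sum_(1 <= i < m) cst (d i) * hcl + cst (d m) * (hcl + lcl).

(* degree of c_1 of the log CM Q-line bundle of the family pr2 : (X,D) -> P^1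
   with polarization L (n-dimensional fibres), as in the context formula *)
Definition cm_deg (n : nat) (K D L : chow) : rat :=
  n%:R * (fib_deg n ((- K - D) * L ^+ n.-1) / fib_deg n (L ^+ n))
       * push_deg n (L ^+ n.+1)
  - (n.+1)%:R * push_deg n ((- K - D) * L ^+ n).

(* Main.v *)
Require Import Defs.
From mathcomp Require Import all_boot all_order all_algebra ring.
Import Order.TTheory GRing.Theory Num.Theory.
Local Open Scope ring_scope.

Lemma ab1 (R : comRingType) (x y : R) : x * y * (x * y) = y ^+ 2 * x ^+ 2.
Proof. ring. Qed.

Lemma powL_gen (R : comRingType) (X A B X2 D2 : R) (hb : B * B = X2 * D2) k :
  exists Q : R,
  (X * A + B) ^+ k.+1 = X ^+ (k.+1) * A ^+ (k.+1) + (X ^+ k * (A ^+ k * B)) *+ (k.+1) + X2 * Q.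
Proof.
elim: k => [|k [Q HQ]].
  exists 0; rewrite !expr1 expr0 mul1r mulr0 addr0 mulr1n; ring.
exists ((k.+1)%:R * X ^+ k * A^+k * D2 + Q * (X * A + B)).
rewrite exprS HQ.
rewrite -[_ *+ k.+1]mulr_natr -[_ *+ k.+2]mulr_natr -!natr1.
rewrite !(exprS X) !(exprS A).
move: (X ^+ k) (A^+k) (k%:R) => Y Ak K.
transitivity (X * (X * Y) * (A * (A * Ak)) + X * Y * (A * Ak * B) * (K + 1 + 1) +
   X2 * ((K+1) * Y * Ak * D2 + Q * (X * A + B)) + (K+1) * Y * Ak * (B * B - X2 * D2)).
  ring.
by rewrite hb subrr mulr0 addr0.
Qed.

Lemma powL (a e : rat) k : exists Q : chow,
  ('X * (a%:P)%:P + (e *: 'X)%:P) ^+ k.+1 = 'X^(k.+1) * (a%:P)%:P ^+ (k.+1)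
   + ('X^k * ((a%:P)%:P ^+ k * (e *: 'X)%:P)) *+ (k.+1) + ('X^2)%:P * Q.
Proof.
apply: (@powL_gen _ _ _ _ _ ((e^+2)%:P%:P)).
rewrite -!rmorphM /=; congr (_ %:P).
by rewrite -!mul_polyC rmorphXn /= ab1.
Qed.

Section S2.
Variables (a e : rat).
Let L : chow := 'X * (a%:P)%:P + (e *: 'X)%:P.

Lemma AkB k : (a%:P)%:P ^+ k * (e *: 'X)%:P = ((a ^+ k)%:P * (e *: 'X))%:P :> chow.
Proof. by rewrite -!rmorphXn -rmorphM. Qed.

Lemma c1 k : ((L ^+ k.+1)`_k.+1)`_0 = a ^+ k.+1.
Proof.
have [Q ->] := powL a e k.
rewrite !coefD coefMn !coefXnM ltnn subnn ltnNge leqnSn /= AkB -!rmorphXn coefCM !coefC /= coefXnM /=.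
by rewrite subSnn /= mul0rn coef0 !addr0.
Qed.

Lemma c2 k : ((L ^+ k.+1)`_k)`_1 = (k.+1)%:R * a ^+ k * e.
Proof.
have [Q ->] := powL a e k.
rewrite !coefD coefMn !coefXnM ltnSn ltnn subnn /= AkB coefCM !coefC /= coefXnM /=.
by rewrite coefMn coefCM coefZ coefX /= mulr1 add0r addr0 mulr_natl mulrnAl.
Qed.
End S2.

Theorem mainTheorem3 (n m : nat) (hn : (1 <= n)%N) (hm : (1 <= m)%N)
  (d : nat -> rat)
  (hd : forall i, (1 <= i <= m)%N -> 0 < d i < 1)
  (hsum : \sum_(1 <= i < m.+1) d i < n.+1%:R) :
  cm_deg n (K_rel n) (bdry m d) (- K_rel n - bdry m d)
  = (n.+1)%:R * d m * ((n.+1)%:R - \sum_(1 <= i < m.+1) d i) ^+ n.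
Proof.
set S := \sum_(1 <= i < m) d i.
have hS : \sum_(1 <= i < m.+1) d i = S + d m by rewrite big_nat_recr.
rewrite hS in hsum *.
set a := (n.+1)%:R - (S + d m).
have ha : a != 0 by rewrite subr_eq0 gt_eqF.
have hL : - K_rel n - bdry m d = 'X * (a%:P)%:P + ((- d m) *: 'X)%:P.
  rewrite /K_rel /bdry /cst /hcl /lcl -mulr_suml -!rmorph_sum /= /a.
  rewrite !rmorphB !rmorphD /= !rmorph_nat -mul_polyC !rmorphM /= !rmorphN /=.
  ring.
rewrite /cm_deg hL.
clear hL; clearbody a.
case: n hn hsum => [//|k] _ _ /=.
rewrite /fib_deg /push_deg -exprS -exprS c1 c2 divff ?expf_neq0 //.
rewrite mulr1 -/a.
rewrite -[(k.+2)%:R]natr1.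
move: (k.+1)%:R (a ^+ k.+1) (d m) => K P D.
ring.
Qed.
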